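(* Let $R$ be a commutative ring, $M$ an $R$-module and $C$ an $R$-linear relation on $M$. If $IM\subseteq(C^{-1})'+C'$ for some ideal $I$ of $R$, then $C^\sharp\cap IM\subseteq C^\flat$; in particular $C^\sharp/C^\flat$ is an $R/I$-module. Furthermore, if $I=\mathrm{rad}(R)$ is the Jacobson radical and $R$ is perfect, then there is an $R[T,T^{-1}]$-module $P$ which is projective over $R$ and such that $P/IP\cong C^\sharp/C^\flat$ as $(R/I)[T,T^{-1}]$-modules.
   Context: An $R$-linear relation on $M$ is a submodule $C\subseteq M\oplus M$; $Cm=\{m':(m,m')\in C\}$, $C^{-1}=\{(y,x):(x,y)\in C\}$. $C''$: the set of $m\in M$ for which there exists $(m_n)_{n\in\mathbb{N}}$ with $m_0=m$ and $m_{n+1}\in Cm_n$ for all $n$; $C'$: those for which such a sequence exists with $m_n=0$ for $n\gg0$; $C^\sharp=C''\cap(C^{-1})''$; $C^\flat=C''\cap(C^{-1})'+(C^{-1})''\cap C'$. $C^\sharp/C^\flat$ is an $R[T,T^{-1}]$-module, $T$ acting by the automorphism $m+C^\flat\mapsto m'+C^\flat$ where $m'\in C^\sharp\cap(C^\flat+Cm)$. A ring is perfect if every module has a projective cover. *)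

(* Defs.v *)
From HB Require Import structures.
From mathcomp Require Import all_boot all_order all_algebra.
Set Implicit Arguments. Unset Strict Implicit. Unset Printing Implicit Defensive.
Import GRing.Theory.
Local Open Scope ring_scope.

Section Ideals.
Variable R : comPzRingType.

Definition is_ideal (I : R -> Prop) : Prop :=
  [/\ I 0, (forall x y, I x -> I y -> I (x + y)) & (forall r x, I x -> I (r * x))].

Definition is_maximal_ideal (J : R -> Prop) : Prop :=
  [/\ is_ideal J, ~ J 1 &
      forall K : R -> Prop, is_ideal K -> (forall x, J x -> K x) ->
        K 1 \/ (forall x, K x -> J x)].

Definition is_jacobson_radical (I : R -> Prop) : Prop :=
  forall x, I x <-> (forall J, is_maximal_ideal J -> J x).
End Ideals.

Section Modules.
Variable R : comPzRingType.

Definition is_submodule (M : lmodType R) (K : M -> Prop) : Prop :=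
  [/\ K 0, (forall x y, K x -> K y -> K (x + y)) & (forall r x, K x -> K (r *: x))].

Inductive ideal_mul (I : R -> Prop) (M : lmodType R) : M -> Prop :=
  | ideal_mul0 : ideal_mul I 0
  | ideal_mulZ r m : I r -> ideal_mul I (r *: m)
  | ideal_mulD a b : ideal_mul I a -> ideal_mul I b -> ideal_mul I (a + b).

Definition projective (P : lmodType R) : Prop :=
  forall (A B : lmodType R) (f : {linear A -> B}) (g : {linear P -> B}),
    (forall b, exists a, f a = b) ->
    exists h : {linear P -> A}, forall x, f (h x) = g x.

Definition projective_cover (N P : lmodType R) (p : {linear P -> N}) : Prop :=
  [/\ projective P, (forall n, exists x, p x = n) &
      (* the kernel of p is superfluous *)
      forall K : P -> Prop, is_submodule K ->
        (forall x, exists k y, [/\ K k, p y = 0 & x = k + y]) ->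
        forall x, K x].

Definition perfect_ring : Prop :=
  forall N : lmodType R, exists (P : lmodType R) (p : {linear P -> N}),
    projective_cover p.
End Modules.

Section LinRel.
Variables (R : comPzRingType) (M : lmodType R).

(* an R-linear relation C ⊆ M ⊕ M; C x y means (x, y) ∈ C, i.e. y ∈ C x *)
Definition is_linrel (C : M -> M -> Prop) : Prop :=
  [/\ C 0 0, (forall a b c d, C a b -> C c d -> C (a + c) (b + d)) &
      (forall r a b, C a b -> C (r *: a) (r *: b))].

Definition linrel_inv (C : M -> M -> Prop) : M -> M -> Prop := fun x y => C y x.

(* C'' : elements admitting an infinite C-chain *)
Definition lr_dd (C : M -> M -> Prop) (m : M) : Prop :=
  exists f : nat -> M, f 0%N = m /\ forall n, C (f n) (f n.+1).

(* C' : elements admitting a C-chain which is eventually 0 *)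
Definition lr_d (C : M -> M -> Prop) (m : M) : Prop :=
  exists (f : nat -> M) (N : nat),
    [/\ f 0%N = m, (forall n, C (f n) (f n.+1)) & (forall n, (N <= n)%N -> f n = 0)].

Definition lr_sharp (C : M -> M -> Prop) (m : M) : Prop :=
  lr_dd C m /\ lr_dd (linrel_inv C) m.

Definition lr_flat (C : M -> M -> Prop) (m : M) : Prop :=
  exists a b, [/\ (lr_dd C a /\ lr_d (linrel_inv C) a),
                  (lr_dd (linrel_inv C) b /\ lr_d C b) & m = a + b].
End LinRel.

(* An R[T,T^{-1}]-module P (R-module with R-linear automorphism T) and an
   isomorphism of (R/I)[T,T^{-1}]-modules P/IP ~= C^sharp/C^flat, encoded by
   its graph lifted to representatives: Phi p m  means  phi(p + IP) = m + C^flat. *)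
Definition quotient_iso (R : comPzRingType) (I : R -> Prop) (M : lmodType R)
  (C : M -> M -> Prop) (P : lmodType R) (T : P -> P) (Phi : P -> M -> Prop) : Prop :=
  [/\
      (Phi 0 0 /\ (forall p q m n, Phi p m -> Phi q n -> Phi (p + q) (m + n)) /\
        (forall r p m, Phi p m -> Phi (r *: p) (r *: m))),
      (forall p m, Phi p m -> lr_sharp C m) /\
      (forall p, exists m, Phi p m),
      (forall m, lr_sharp C m -> exists p, Phi p m),
      (* well defined on P/IP and injective: kernel is exactly IP *)
      (forall p m, Phi p m -> (lr_flat C m <-> ideal_mul I p)) &
      (* compatible with T: T(m + C^flat) = m' + C^flat, m' in C^sharp ∩ (C^flat + C m) *)
      (forall p m, Phi p m -> exists m', Phi (T p) m' /\
          exists f c, [/\ lr_flat C f, C m c & m' = f + c])].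

(* Main.v *)
Require Import Defs.
From HB Require Import structures.
From mathcomp Require Import all_boot all_order all_algebra.
From mathcomp Require Import finmap monalg.
From Stdlib Require Import ClassicalEpsilon ClassicalDescription FunctionalExtensionality PropExtensionality.
Set Implicit Arguments. Unset Strict Implicit. Unset Printing Implicit Defensive.
Import GRing.Theory.
Local Open Scope ring_scope.

Section Chains.
Variables (R : comPzRingType) (M : lmodType R) (C : M -> M -> Prop).
Hypothesis HC : is_linrel C.

Lemma linrel_inv_is : is_linrel (linrel_inv C).
Proof.
case: HC => h0 hD hZ; split => //; rewrite /linrel_inv.
- by move=> a b c d h1 h2; apply: hD.
- by move=> r a b h; apply: hZ.
Qed.

Lemma C0 : C 0 0. Proof. by case: HC. Qed.
Lemma CD a b c d : C a b -> C c d -> C (a + c) (b + d).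
Proof. by case: HC => _ h _; apply: h. Qed.
Lemma CZ r a b : C a b -> C (r *: a) (r *: b).
Proof. by case: HC => _ _ h; apply: h. Qed.
Lemma CN a b : C a b -> C (- a) (- b).
Proof. by move=> /(CZ (-1)); rewrite !scaleN1r. Qed.
Lemma CB a b c d : C a b -> C c d -> C (a - c) (b - d).
Proof. by move=> h1 /CN; apply: CD. Qed.

Lemma dd0 : lr_dd C 0.
Proof. by exists (fun _ => 0); split => // n; apply: C0. Qed.
Lemma ddD x y : lr_dd C x -> lr_dd C y -> lr_dd C (x + y).
Proof.
move=> [f [f0 hf]] [g [g0 hg]]; exists (fun n => f n + g n); split.
  by rewrite f0 g0.
by move=> n; apply: CD.
Qed.
Lemma ddZ r x : lr_dd C x -> lr_dd C (r *: x).
Proof.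
move=> [f [f0 hf]]; exists (fun n => r *: f n); split; first by rewrite f0.
by move=> n; apply: CZ.
Qed.
Lemma ddN x : lr_dd C x -> lr_dd C (- x).
Proof. by move=> /(ddZ (-1)); rewrite scaleN1r. Qed.
Lemma ddB x y : lr_dd C x -> lr_dd C y -> lr_dd C (x - y).
Proof. by move=> hx /ddN; apply: ddD. Qed.

Lemma d0 : lr_d C 0.
Proof. by exists (fun _ => 0), 0%N; split => // n; apply: C0. Qed.
Lemma dD x y : lr_d C x -> lr_d C y -> lr_d C (x + y).
Proof.
move=> [f [N [f0 hf fN]]] [g [N' [g0 hg gN]]].
exists (fun n => f n + g n), (maxn N N'); split.
- by rewrite f0 g0.
- by move=> n; apply: CD.
- move=> n; rewrite geq_max => /andP[h1 h2]; by rewrite fN // gN // addr0.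
Qed.
Lemma dZ r x : lr_d C x -> lr_d C (r *: x).
Proof.
move=> [f [N [f0 hf fN]]]; exists (fun n => r *: f n), N; split.
- by rewrite f0.
- by move=> n; apply: CZ.
- by move=> n hn; rewrite fN // scaler0.
Qed.
Lemma dN x : lr_d C x -> lr_d C (- x).
Proof. by move=> /(dZ (-1)); rewrite scaleN1r. Qed.
Lemma dB x y : lr_d C x -> lr_d C y -> lr_d C (x - y).
Proof. by move=> hx /dN; apply: dD. Qed.
Lemma d_dd x : lr_d C x -> lr_dd C x.
Proof. by move=> [f [N [f0 hf _]]]; exists f. Qed.

Lemma dd_next x : lr_dd C x -> exists c, C x c /\ lr_dd C c.
Proof.
move=> [f [f0 hf]]; exists (f 1%N); split; first by rewrite -f0.
by exists (fun n => f n.+1); split.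
Qed.
Lemma d_next x : lr_d C x -> exists c, C x c /\ lr_d C c.
Proof.
move=> [f [N [f0 hf fN]]]; exists (f 1%N); split; first by rewrite -f0.
exists (fun n => f n.+1), N; split => // n hn; apply: fN; exact: leqW.
Qed.
Lemma dd_prev x c : lr_dd C x -> C c x -> lr_dd C c.
Proof.
move=> [f [f0 hf]] hc; exists (fun n => if n is k.+1 then f k else c).
split => // [[|n]] //=; by rewrite f0.
Qed.
Lemma d_prev x c : lr_d C x -> C c x -> lr_d C c.
Proof.
move=> [f [N [f0 hf fN]]] hc.
exists (fun n => if n is k.+1 then f k else c), N.+1; split => //.
- by case=> [|n] /=; [rewrite f0 | apply: hf].
- by case=> [|n] //= hn; apply: fN.
Qed.
End Chains.

Section Sharp.
Variables (R : comPzRingType) (M : lmodType R) (C : M -> M -> Prop).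
Hypothesis HC : is_linrel C.
Let HCi := linrel_inv_is HC.
Local Notation sharp := (lr_sharp C).
Local Notation flat := (lr_flat C).

Lemma sharp0 : sharp 0. Proof. by split; apply: dd0. Qed.
Lemma sharpD x y : sharp x -> sharp y -> sharp (x + y).
Proof. by move=> [h1 h2] [h3 h4]; split; apply: ddD. Qed.
Lemma sharpZ r x : sharp x -> sharp (r *: x).
Proof. by move=> [h1 h2]; split; apply: ddZ. Qed.
Lemma sharpN x : sharp x -> sharp (- x).
Proof. by move=> [h1 h2]; split; apply: ddN. Qed.
Lemma sharpB x y : sharp x -> sharp y -> sharp (x - y).
Proof. by move=> hx /sharpN; apply: sharpD. Qed.

Lemma flat0 : flat 0.
Proof. exists 0, 0; split; [split; [exact: dd0 | exact: d0]|split; [exact: dd0|exact: d0]|by rewrite addr0]. Qed.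
Lemma flatD x y : flat x -> flat y -> flat (x + y).
Proof.
move=> [a [b [[ha1 ha2] [hb1 hb2] ->]]] [a' [b' [[ha1' ha2'] [hb1' hb2'] ->]]].
exists (a + a'), (b + b'); split.
- by split; [apply: ddD | apply: dD].
- by split; [apply: ddD | apply: dD].
- by rewrite addrACA.
Qed.
Lemma flatZ r x : flat x -> flat (r *: x).
Proof.
move=> [a [b [[ha1 ha2] [hb1 hb2] ->]]].
exists (r *: a), (r *: b); split.
- by split; [apply: ddZ | apply: dZ].
- by split; [apply: ddZ | apply: dZ].
- by rewrite scalerDr.
Qed.
Lemma flatN x : flat x -> flat (- x).
Proof. by move=> /(flatZ (-1)); rewrite scaleN1r. Qed.
Lemma flatB x y : flat x -> flat y -> flat (x - y).
Proof. by move=> hx /flatN; apply: flatD. Qed.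

Lemma flat_sharp x : flat x -> sharp x.
Proof.
move=> [a [b [[ha1 ha2] [hb1 hb2] ->]]]; apply: sharpD; split => //.
- exact: d_dd.
- exact: d_dd.
Qed.

Lemma sharp_next m : sharp m -> exists c, C m c /\ sharp c.
Proof.
move=> [h1 h2]; have [c [hc hc']] := dd_next h1.
by exists c; split => //; split => //; exact: (dd_prev h2 hc).
Qed.

Lemma sharp_prev m : sharp m -> exists c, C c m /\ sharp c.
Proof.
move=> [h1 h2]; have [c [hc hc']] := dd_next h2.
by exists c; split => //; split => //; exact: (dd_prev h1 hc).
Qed.

Lemma flat_img u x : flat u -> C u x -> sharp x -> flat x.
Proof.
move=> [a [b [[ha1 ha2] [hb1 hb2] ->]]] hx [hx1 hx2].
have [b1 [hbb1 hb1d]] := d_next hb2.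
have haa : C a (x - b1) by have := CB HC hx hbb1; rewrite addrK.
exists (x - b1), b1; split.
- split; first exact: (ddB HC hx1 (d_dd hb1d)).
  exact: (d_prev ha2 haa).
- by split => //; apply: (dd_prev hb1 hbb1).
- by rewrite subrK.
Qed.

End Sharp.

Section Sharp2.
Variables (R : comPzRingType) (M : lmodType R) (C : M -> M -> Prop).
Hypothesis HC : is_linrel C.
Let HCi := linrel_inv_is HC.
Local Notation sharp := (lr_sharp C).
Local Notation flat := (lr_flat C).

Lemma sharp_inv m : lr_sharp (linrel_inv C) m <-> sharp m.
Proof. by split => -[h1 h2]; split. Qed.
Lemma flat_inv m : lr_flat (linrel_inv C) m <-> flat m.
Proof.
split => -[a [b [h1 h2 ->]]]; exists b, a; split => //; exact: addrC.
Qed.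

Lemma flat_img_inv u x : flat u -> C x u -> sharp x -> flat x.
Proof.
move=> /flat_inv hu hxu /sharp_inv hx; apply/flat_inv.
exact: (flat_img HCi hu hxu hx).
Qed.

Variable I : R -> Prop.
Hypothesis HI : forall m, ideal_mul I m ->
     exists a b, [/\ lr_d (linrel_inv C) a, lr_d C b & m = a + b].

Lemma part1a m : sharp m -> ideal_mul I m -> flat m.
Proof.
move=> hs /HI [a [b [ha hb hm]]]; subst m; case: hs => hm1 hm2.
exists a, b; split.
- split => //; have -> : a = (a + b) - b by rewrite addrK.
  exact: (ddB HC hm1 (d_dd hb)).
- split; last by [].
  have -> : b = (a + b) - a by rewrite addrC addKr.
  exact: (ddB HCi hm2 (d_dd ha)).
- by [].
Qed.

Lemma part1b r m : I r -> sharp m -> flat (r *: m).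
Proof. move=> hr hm; apply: part1a; [exact: sharpZ | exact: ideal_mulZ]. Qed.
End Sharp2.

Definition pb (P : Prop) : bool := if excluded_middle_informative P then true else false.
Lemma pbP P : reflect P (pb P).
Proof. by rewrite /pb; case: excluded_middle_informative => h; constructor. Qed.

Record linrelT (R : comPzRingType) (M : lmodType R) :=
  LinRel { lrel :> M -> M -> Prop; lrelP : is_linrel lrel }.

Section Quot.
Variables (R : comPzRingType) (M : lmodType R) (L : linrelT M).
Local Notation C := (lrel L).
Let HC := lrelP L.
Local Notation sharp := (lr_sharp C).
Local Notation flat := (lr_flat C).

Definition eqf (x y : M) := flat (x - y).
Lemma eqf_refl x : eqf x x. Proof. by rewrite /eqf subrr; apply: flat0. Qed.
Lemma eqf_sym x y : eqf x y -> eqf y x.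
Proof. by rewrite /eqf => /(flatN HC); rewrite opprB. Qed.
Lemma eqf_trans x y z : eqf x y -> eqf y z -> eqf x z.
Proof. by rewrite /eqf => h1 h2; have := flatD HC h1 h2; rewrite addrA subrK. Qed.
Lemma eqf_add x x' y y' : eqf x x' -> eqf y y' -> eqf (x + y) (x' + y').
Proof. by rewrite /eqf => h1 h2; have := flatD HC h1 h2; rewrite opprD addrACA. Qed.
Lemma eqf_opp x x' : eqf x x' -> eqf (- x) (- x').
Proof. by rewrite /eqf => /(flatN HC); rewrite opprB opprK addrC. Qed.
Lemma eqf_scale r x x' : eqf x x' -> eqf (r *: x) (r *: x').
Proof. by rewrite /eqf => /(flatZ HC r); rewrite scalerBr. Qed.
Lemma eqf_eq x y : x = y -> eqf x y. Proof. by move=> ->; apply: eqf_refl. Qed.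

Definition qrepr (m : M) : M := epsilon (inhabits 0) (fun y => flat (y - m)).
Lemma repr_flat m : eqf (qrepr m) m.
Proof.
apply: (epsilon_spec (inhabits 0) (fun y => flat (y - m))).
by exists m; apply: eqf_refl.
Qed.
Lemma repr_eq m m' : eqf m m' -> qrepr m = qrepr m'.
Proof.
rewrite /qrepr => h; f_equal; apply: functional_extensionality => y.
apply: propositional_extensionality; split => h'.
- exact: (eqf_trans (eqf_sym (eqf_sym h')) h).
- exact: (eqf_trans h' (eqf_sym h)).
Qed.
Lemma repr_sharp m : sharp m -> sharp (qrepr m).
Proof.
move=> hm; rewrite -(subrK m (qrepr m)); apply: sharpD => //.
exact: flat_sharp (repr_flat m).
Qed.
Lemma repr_idem m : qrepr (qrepr m) = qrepr m.
Proof. exact: repr_eq (repr_flat m). Qed.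

Record Q := MkQ { qval : M; qP : pb (sharp qval /\ qrepr qval = qval) }.
HB.instance Definition _ := [isSub for qval].
HB.instance Definition _ := [Equality of Q by <:].
HB.instance Definition _ := [Choice of Q by <:].

Lemma qval_sharp (a : Q) : sharp (qval a).
Proof. by case: a => v /= /pbP []. Qed.
Lemma qval_repr (a : Q) : qrepr (qval a) = qval a.
Proof. by case: a => v /= /pbP []. Qed.

Lemma repr_good m : sharp m -> pb (sharp (qrepr m) /\ qrepr (qrepr m) = qrepr m).
Proof. by move=> hm; apply/pbP; split; [apply: repr_sharp | apply: repr_idem]. Qed.

Definition qz : Q := MkQ (repr_good (sharp0 HC)).
Definition qproj (m : M) : Q := insubd qz (qrepr m).

Lemma qval_qproj m : sharp m -> qval (qproj m) = qrepr m.
Proof. by move=> hm; rewrite /qproj insubdK //; apply: repr_good. Qed.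
Lemma qproj_eq m m' : eqf m m' -> qproj m = qproj m'.
Proof. by move=> /repr_eq; rewrite /qproj => ->. Qed.
Lemma qvalK a : qproj (qval a) = a.
Proof. apply: val_inj; change (qval (qproj (qval a)) = qval a). by rewrite qval_qproj ?qval_repr //; apply: qval_sharp. Qed.
Lemma qval_eqf m : sharp m -> eqf (qval (qproj m)) m.
Proof. by move=> hm; rewrite qval_qproj //; apply: repr_flat. Qed.

Definition qadd (a b : Q) := qproj (qval a + qval b).
Definition qopp (a : Q) := qproj (- qval a).
Definition qzero := qproj 0.
Definition qscale (r : R) (a : Q) := qproj (r *: qval a).

Ltac shp := repeat first [ apply: sharpD | apply: sharpN | apply: sharpZ | apply: sharp0
   | apply: qval_sharp | assumption ].

Lemma qaddA : associative qadd.
Proof.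
move=> a b c; rewrite /qadd; apply: qproj_eq.
apply: eqf_trans (eqf_add (eqf_refl _) (qval_eqf _)) _; first by shp.
rewrite addrA; apply: eqf_add (eqf_sym (qval_eqf _)) (eqf_refl _); by shp.
Qed.
Lemma qaddC : commutative qadd.
Proof. by move=> a b; rewrite /qadd addrC. Qed.
Lemma qadd0 : left_id qzero qadd.
Proof.
move=> a; rewrite /qadd /qzero -[RHS]qvalK; apply: qproj_eq.
apply: eqf_trans (eqf_add (qval_eqf _) (eqf_refl _)) _; first by shp.
by rewrite add0r; apply: eqf_refl.
Qed.
Lemma qaddN : left_inverse qzero qopp qadd.
Proof.
move=> a; rewrite /qadd /qzero /qopp; apply: qproj_eq.
apply: eqf_trans (eqf_add (qval_eqf _) (eqf_refl _)) _; first by shp.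
by rewrite addNr; apply: eqf_refl.
Qed.

HB.instance Definition _ := GRing.isZmodule.Build Q qaddA qaddC qadd0 qaddN.

Lemma qscaleA a b v : qscale a (qscale b v) = qscale (a * b) v.
Proof.
rewrite /qscale; apply: qproj_eq.
apply: eqf_trans (eqf_scale _ (qval_eqf _)) _; first by shp.
by rewrite scalerA; apply: eqf_refl.
Qed.
Lemma qscale1 : left_id 1 qscale.
Proof. by move=> v; rewrite /qscale scale1r qvalK. Qed.
Lemma qscaleDr : right_distributive qscale +%R.
Proof.
move=> r u v; rewrite /qscale /= /qadd; apply: qproj_eq.
apply: eqf_trans (eqf_scale _ (qval_eqf _)) _; first by shp.
rewrite scalerDr; apply: eqf_sym; apply: eqf_add; apply: qval_eqf; by shp.
Qed.
Lemma qscaleDl v : {morph qscale^~ v: a b / a + b}.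
Proof.
move=> a b; rewrite /qscale /= /qadd; apply: qproj_eq.
rewrite scalerDl; apply: eqf_sym; apply: eqf_add; apply: qval_eqf; by shp.
Qed.

HB.instance Definition _ := GRing.Zmodule_isLmodule.Build R Q qscaleA qscale1 qscaleDr qscaleDl.

Lemma qaddE (a b : Q) : a + b = qproj (qval a + qval b). Proof. by []. Qed.
Lemma qscaleE r (a : Q) : r *: a = qproj (r *: qval a). Proof. by []. Qed.
Lemma qzeroE : (0 : Q) = qproj 0. Proof. by []. Qed.

Lemma qproj_add x y : sharp x -> sharp y -> qproj x + qproj y = qproj (x + y).
Proof.
move=> hx hy; rewrite qaddE; apply: qproj_eq.
by apply: eqf_add; apply: qval_eqf.
Qed.
Lemma qproj_scale r x : sharp x -> r *: qproj x = qproj (r *: x).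
Proof.
move=> hx; rewrite qscaleE; apply: qproj_eq.
by apply: eqf_scale; apply: qval_eqf.
Qed.
Lemma qval0 : qval (0 : Q) = qrepr 0.
Proof. by rewrite qzeroE qval_qproj //; apply: sharp0. Qed.
End Quot.

Section TQ.
Variables (R : comPzRingType) (M : lmodType R) (L : linrelT M).
Local Notation C := (lrel L).
Let HC := lrelP L.
Local Notation sharp := (lr_sharp C).
Local Notation flat := (lr_flat C).
Variable D : M -> M -> Prop.
Hypothesis HD : is_linrel D.
Hypothesis Dimg : forall u x, flat u -> D u x -> sharp x -> flat x.
Hypothesis Dnext : forall m, sharp m -> exists c, D m c /\ sharp c.

Definition Tsel (m : M) : M := epsilon (inhabits 0) (fun c => D m c /\ sharp c).
Definition TQ (a : Q L) : Q L := qproj L (Tsel (qval a)).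

Lemma Tsel_spec m : sharp m -> D m (Tsel m) /\ sharp (Tsel m).
Proof. by move=> hm; apply: (epsilon_spec (inhabits 0) (fun c => D m c /\ sharp c)); apply: Dnext. Qed.

Lemma TQ_char a y z : eqf L (qval a) y -> D y z -> sharp z -> TQ a = qproj L z.
Proof.
move=> hy hz sz; have [h1 h2] := Tsel_spec (qval_sharp a).
apply: qproj_eq; apply: (Dimg hy); first exact: (CB HD).
exact: (sharpB HC).
Qed.

Lemma TQ_lin : linear_for *:%R TQ.
Proof.
move=> r u v.
have [hu1 hu2] := Tsel_spec (qval_sharp u).
have [hv1 hv2] := Tsel_spec (qval_sharp v).
rewrite /TQ qproj_scale // qproj_add //; try exact: (sharpZ HC).
apply: (TQ_char (y := r *: qval u + qval v)).
- have -> : r *: u + v = qproj L (r *: qval u + qval v).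
    rewrite qaddE qscaleE; apply: qproj_eq; apply: eqf_add; last exact: eqf_refl; apply: qval_eqf.
    apply: (sharpZ HC); exact: qval_sharp.
  apply: qval_eqf; apply: (sharpD HC); [apply: (sharpZ HC)|]; exact: qval_sharp.
- by apply: (CD HD) => //; apply: (CZ HD).
- by apply: (sharpD HC) => //; apply: (sharpZ HC).
Qed.
End TQ.

Section FreeMod.
Variables (R : comPzRingType) (K : choiceType).
Definition FM := malg K R.
HB.instance Definition _ := GRing.Zmodule.on FM.

Definition fgs (c : R) (g : FM) : FM := \sum_(k <- msupp g) << c * g@_k *g k >>.

Lemma fgsE c g k : (fgs c g)@_k = c * g@_k.
Proof.
rewrite {2}[g]monalgE !raddf_sum mulr_sumr.
by apply/eq_bigr=> /= i _; rewrite !mcoeffU mulrnAr.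
Qed.

Lemma fgsA c1 c2 g : fgs c1 (fgs c2 g) = fgs (c1 * c2) g.
Proof. by apply/malgP=> x; rewrite !fgsE mulrA. Qed.
Lemma fgs1 : left_id 1 fgs.
Proof. by move=> D; apply/malgP=> k; rewrite !fgsE mul1r. Qed.
Lemma fgsDr : right_distributive fgs +%R.
Proof. by move=> c g1 g2; apply/malgP=> k; rewrite !(mcoeffD, fgsE) mulrDr. Qed.
Lemma fgsDl g : {morph fgs^~ g : c1 c2 / c1 + c2}.
Proof. by move=> c1 c2; apply/malgP=> x; rewrite !(mcoeffD, fgsE) mulrDl. Qed.

HB.instance Definition _ := GRing.Zmodule_isLmodule.Build R FM fgsA fgs1 fgsDr fgsDl.

Lemma fmZ c (g : FM) k : (c *: g)@_k = c * g@_k.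
Proof. exact: fgsE. Qed.
End FreeMod.

Section Dual.
Variables (R : comPzRingType) (P : lmodType R).

Definition piF (g : FM R P) : P := \sum_(k <- msupp g) g@_k *: k.

Lemma msupp_sub (g : FM R P) (d : {fset P}) :
  (forall k, k \notin d -> g@_k = 0) -> (msupp g `<=` d)%fset.
Proof.
move=> h; apply/fsubsetP => k; rewrite -mcoeff_neq0; apply: contraR => /h ->.
by rewrite eqxx.
Qed.

Lemma piFw (g : FM R P) d : (msupp g `<=` d)%fset -> piF g = \sum_(k <- d) g@_k *: k.
Proof.
move=> hd; rewrite /piF; apply: big_fset_incl => // k _ hk.
by rewrite mcoeff_outdom // scale0r.
Qed.

Lemma piF_lin : linear_for *:%R piF.
Proof.
move=> r g h; set d := (msupp g `|` msupp h)%fset.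
have hg : (msupp g `<=` d)%fset by apply: fsubsetUl.
have hh : (msupp h `<=` d)%fset by apply: fsubsetUr.
have hgh : (msupp (r *: g + h) `<=` d)%fset.
  apply: msupp_sub => k; rewrite in_fsetU negb_or => /andP [k1 k2].
  by rewrite mcoeffD fmZ !mcoeff_outdom // mulr0 addr0.
rewrite (piFw hg) (piFw hh) (piFw hgh) scaler_sumr -big_split /=.
apply: eq_bigr => k _; by rewrite mcoeffD fmZ scalerDl scalerA.
Qed.

HB.instance Definition _ := GRing.isLinear.Build R (FM R P) P *:%R piF piF_lin.

Lemma piF_surj (x : P) : exists g : FM R P, piF g = x.
Proof.
exists << 1 *g x >>; rewrite (piFw (msuppU_le (k := x) (x := 1))) big_seq_fset1 //.
by rewrite mcoeffUU scale1r.
Qed.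

Lemma ideal_mul_sum (I : R -> Prop) (s : seq P) (F : P -> R) :
  (forall k, I (F k)) -> ideal_mul I (\sum_(k <- s) F k *: k).
Proof.
move=> h; elim: s => [|k s IH]; first by rewrite big_nil; constructor.
by rewrite big_cons; constructor => //; constructor.
Qed.

Variable N : lmodType R.
Variable I : R -> Prop.
Hypothesis HI : is_jacobson_radical I.
Variable p : {linear P -> N}.
Hypothesis Hp : projective_cover p.

Lemma cover_ker x : p x = 0 -> ideal_mul I x.
Proof.
case: Hp => projP psurj psuper px0.
have [s hs] := projP (FM R P) P piF idfun piF_surj.
have -> : x = piF (s x) by rewrite hs.
rewrite /piF; apply: ideal_mul_sum => k.
pose phi y := (s y)@_k.
have phiD y z : phi (y + z) = phi y + phi z by rewrite /phi linearD mcoeffD.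
have phiZ r y : phi (r *: y) = r * phi y by rewrite /phi linearZ fmZ.
have phi0 : phi 0 = 0 by rewrite /phi linear0 mcoeff0.
change (I (phi x)); apply/HI => J [[J0 JD JM] J1 Jmax].
pose K' a := exists j k0, [/\ J j, p k0 = 0 & a = j + phi k0].
have K'id : is_ideal K'.
  split.
  - by exists 0, 0; split => //; rewrite ?linear0 // phi0 addr0.
  - move=> a b [j [k0 [hj hk ->]]] [j' [k0' [hj' hk' ->]]].
    exists (j + j'), (k0 + k0'); split; first exact: JD.
      by rewrite linearD hk hk' addr0.
    by rewrite phiD addrACA.
  - move=> r a [j [k0 [hj hk ->]]]; exists (r * j), (r *: k0); split.
    + exact: JM.
    + by rewrite linearZ_LR hk scaler0.
    + by rewrite phiZ mulrDr.
have JK' : forall a, J a -> K' a by move=> a ha; exists a, 0; split; rewrite ?linear0 ?phi0 ?addr0.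
case: (Jmax K' K'id JK') => [[j0 [k0 [hj0 hk0 e1]]]|hK]; last first.
  apply: hK; exists 0, x; split => //; by rewrite add0r.
exfalso; apply: J1.
have Lsub : is_submodule (fun y => J (phi y)).
  split; first by rewrite phi0.
  - by move=> a b ha hb; rewrite phiD; apply: JD.
  - by move=> r a ha; rewrite phiZ; apply: JM.
have Lall := psuper _ Lsub.
have hJk0 : J (phi k0).
  apply: Lall => y; exists (y - phi y *: k0), (phi y *: k0); split.
  - have phiB a b : phi (a - b) = phi a - phi b by rewrite /phi linearB mcoeffB.
    rewrite phiB phiZ -{1}(mulr1 (phi y)) -mulrBr e1 addrK.
    exact: JM.
  - by rewrite linearZ_LR hk0 scaler0.
  - by rewrite subrK.
by rewrite e1; apply: JD.
Qed.
End Dual.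

Section Cover.
Variables (R : comPzRingType) (N P : lmodType R) (p : {linear P -> N}).
Hypothesis Hp : projective_cover p.

Lemma cover_surj (g : {linear P -> P}) : (forall x, p (g x) = p x) ->
  forall y, exists x, g x = y.
Proof.
case: Hp => projP psurj psuper hg.
apply: (psuper (fun y => exists x, g x = y)).
- split.
  + by exists 0; rewrite linear0.
  + by move=> a b [x <-] [y <-]; exists (x + y); rewrite linearD.
  + by move=> r a [x <-]; exists (r *: x); rewrite linearZ_LR.
- move=> y; exists (g y), (y - g y); split.
  + by exists y.
  + by rewrite linearB hg subrr.
  + by rewrite addrC subrK.
Qed.

Lemma cover_auto (g : {linear P -> P}) : (forall x, p (g x) = p x) ->
  exists h : P -> P, cancel g h /\ cancel h g.
Proof.
move=> hg; have gs := cover_surj hg.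
case: Hp => projP _ _.
have [h hh0] := projP P P g idfun gs.
have hh x : g (h x) = x := hh0 x.
have hph x : p (h x) = p x by rewrite -[in RHS](hh x) hg.
have hs := cover_surj hph.
exists h; split => // x.
have [y <-] := hs x.
by rewrite hh.
Qed.

Lemma lift_bij (S S' : {linear P -> P}) :
  (forall x, p (S' (S x)) = p x) -> (forall x, p (S (S' x)) = p x) -> bijective S.
Proof.
move=> h1 h2.
have [u [u1 u2]] := cover_auto (g := S' \o S) h1.
have [v [v1 v2]] := cover_auto (g := S \o S') h2.
exists (u \o S') => x /=; first exact: (u1 x).
have e := v2 x; rewrite /= in e.
rewrite -{1}e.
have := u1 (S' (v x)); rewrite /= => ->.
exact: e.
Qed.
End Cover.

Definition TQf (R : comPzRingType) (M : lmodType R) (L : linrelT M) := @TQ _ _ L (lrel L).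
Definition TQb (R : comPzRingType) (M : lmodType R) (L : linrelT M) := @TQ _ _ L (linrel_inv (lrel L)).

HB.instance Definition _ (R : comPzRingType) (M : lmodType R) (L : linrelT M) :=
  GRing.isLinear.Build R (Q L) (Q L) *:%R ((@TQf _ _ L))
    (TQ_lin (lrelP L) (flat_img (lrelP L)) (@sharp_next _ _ (lrel L))).
HB.instance Definition _ (R : comPzRingType) (M : lmodType R) (L : linrelT M) :=
  GRing.isLinear.Build R (Q L) (Q L) *:%R ((@TQb _ _ L))
    (TQ_lin (linrel_inv_is (lrelP L)) (flat_img_inv (lrelP L)) (@sharp_prev _ _ (lrel L))).

Section Main.
Variables (R : comPzRingType) (M : lmodType R) (L : linrelT M).
Local Notation C := (lrel L).
Let HC := lrelP L.
Let HCi := linrel_inv_is HC.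
Local Notation sharp := (lr_sharp C).
Local Notation flat := (lr_flat C).

Lemma TQf_char (a : Q L) y z : eqf L (qval a) y -> C y z -> sharp z -> (@TQf _ _ L) a = qproj L z.
Proof. exact: (TQ_char HC (flat_img HC) (@sharp_next _ _ C)). Qed.
Lemma TQb_char (a : Q L) y z : eqf L (qval a) y -> C z y -> sharp z -> (@TQb _ _ L) a = qproj L z.
Proof. exact: (TQ_char HCi (flat_img_inv HC) (@sharp_prev _ _ C)). Qed.
Lemma TQf_spec (a : Q L) : C (qval a) (Tsel L C (qval a)) /\ sharp (Tsel L C (qval a)).
Proof. exact: (Tsel_spec (@sharp_next _ _ C) (qval_sharp a)). Qed.
Lemma TQb_spec (a : Q L) : C (Tsel L (linrel_inv C) (qval a)) (qval a) /\ sharp (Tsel L (linrel_inv C) (qval a)).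
Proof. exact: (Tsel_spec (@sharp_prev _ _ C) (qval_sharp a)). Qed.

Lemma TQbf (a : Q L) : (@TQb _ _ L) ((@TQf _ _ L) a) = a.
Proof.
have [h1 h2] := TQf_spec a.
rewrite -[RHS]qvalK; apply: (TQb_char (y := Tsel L C (qval a))) => //.
- by rewrite /TQf /TQ; apply: qval_eqf.
- exact: qval_sharp.
Qed.
Lemma TQfb (a : Q L) : (@TQf _ _ L) ((@TQb _ _ L) a) = a.
Proof.
have [h1 h2] := TQb_spec a.
rewrite -[RHS]qvalK; apply: (TQf_char (y := Tsel L (linrel_inv C) (qval a))) => //.
- by rewrite /TQb /TQ; apply: qval_eqf.
- exact: qval_sharp.
Qed.

Variable I : R -> Prop.
Hypothesis HI : forall m, ideal_mul I m ->
     exists a b, [/\ lr_d (linrel_inv C) a, lr_d C b & m = a + b].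

Lemma part2 : is_jacobson_radical I -> perfect_ring R ->
   exists (P : lmodType R) (T : {linear P -> P}) (Phi : P -> M -> Prop),
     [/\ bijective T, projective P & quotient_iso I C T Phi].
Proof.
move=> HJ Hperf.
have [P [p Hp]] := Hperf (Q L).
have Hp' := Hp; case: Hp' => projP psurj psuper.
have [S hS] := projP P (Q L) p ((@TQf _ _ L) \o p) psurj.
have [S' hS'] := projP P (Q L) p ((@TQb _ _ L) \o p) psurj.
have bS : bijective S.
  apply: (@lift_bij _ _ _ p Hp S S') => x.
  - by rewrite hS' /= hS /= TQbf.
  - by rewrite hS /= hS' /= TQfb.
pose Phi (x : P) (m : M) := sharp m /\ qval (p x) = qrepr L m.
exists P, S, Phi; split => //; split.
- split; first by split; [apply: sharp0 | rewrite linear0 qval0].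
  split.
  + move=> x y m n [hm ex] [hn ey]; split; first exact: sharpD.
    rewrite linearD qaddE qval_qproj; last by apply: (sharpD HC); apply: qval_sharp.
    rewrite ex ey.
    apply: repr_eq.
    by apply: eqf_add; apply: repr_flat.
  + move=> r x m [hm ex]; split; first exact: sharpZ.
    rewrite linearZ_LR qscaleE qval_qproj; last by apply: (sharpZ HC); apply: qval_sharp.
    rewrite ex.
    apply: repr_eq.
    by apply: eqf_scale; apply: repr_flat.
- split; first by move=> x m [].
  move=> x; exists (qval (p x)); split; first exact: qval_sharp.
  by rewrite qval_repr.
- move=> m hm; have [x hx] := psurj (qproj L m); exists x; split => //.
  by rewrite hx qval_qproj.
- move=> x m [hm ex].
  have e1 : flat m <-> p x = 0.
    split => h.
    + apply: val_inj; change (qval (p x) = qval (0 : Q L)).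
      rewrite ex qval0; apply: repr_eq; by rewrite /eqf subr0.
    + have : qrepr L m = qrepr L 0 by rewrite -ex h qval0.
      move=> e; have := eqf_trans (eqf_sym (repr_flat L m)) (eqf_eq L e).
      move=> h2; have := eqf_trans h2 (repr_flat L 0).
      by rewrite /eqf subr0.
  rewrite e1; split; first exact: (cover_ker HJ Hp).
  elim => [|r y hr|a b _ ha _ hb].
  + exact: linear0.
  + rewrite linearZ_LR qscaleE qzeroE; apply: qproj_eq.
    rewrite /eqf subr0; apply: (part1b HC HI hr); exact: qval_sharp.
  + by rewrite linearD ha hb addr0.
- move=> x m [hm ex].
  exists (qval (p (S x))); split.
    split; first exact: qval_sharp.
    by rewrite qval_repr.
  have hrm : sharp (qrepr L m) by apply: repr_sharp.
  set t := Tsel L C (qrepr L m).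
  have [ht1 ht2] : C (qrepr L m) t /\ sharp t by apply: (Tsel_spec (@sharp_next _ _ C)).
  have hu : flat (m - qrepr L m) by have := eqf_sym (repr_flat L m); rewrite /eqf.
  have [c1 [hc1 sc1]] := sharp_next (flat_sharp HC hu).
  have fc1 := flat_img HC hu hc1 sc1.
  exists (qval (p (S x)) - (t + c1)), (t + c1); split.
  + have -> : qval (p (S x)) = qval (qproj L t).
      by rewrite hS /= /TQf /TQ ex.
    rewrite opprD addrA; apply: (flatB HC); last exact: fc1.
    exact: (qval_eqf ht2).
  + by have := CD HC ht1 hc1; rewrite addrC subrK.
  + by rewrite subrK.
Qed.
End Main.

Theorem lemma4p12 (R : comPzRingType) (M : lmodType R) (C : M -> M -> Prop)
  (I : R -> Prop) :
  is_linrel C -> is_ideal I ->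
  (forall m, ideal_mul I m ->
     exists a b, [/\ lr_d (linrel_inv C) a, lr_d C b & m = a + b]) ->
  ((forall m, lr_sharp C m -> ideal_mul I m -> lr_flat C m) /\
   (* in particular C^sharp / C^flat is annihilated by I, i.e. an R/I-module *)
   (forall r m, I r -> lr_sharp C m -> lr_flat C (r *: m))) /\
  (is_jacobson_radical I -> perfect_ring R ->
   exists (P : lmodType R) (T : {linear P -> P}) (Phi : P -> M -> Prop),
     [/\ bijective T, projective P & quotient_iso I C T Phi]).
Proof.
move=> HC HIid HI.
split.
- split; first exact: (part1a HC HI).
  by move=> r m hr hm; exact: (part1b HC HI hr hm).
- exact: (@part2 R M (LinRel HC) I HI).
Qed.
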